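(* Assume that $N\le p$. Then $(k[U_N])_{[e-1]}\subset k[U_N]_{<d}\subset(k[U_N])_{[(p-1)(d-1)]}$ provided that $e(N-1)<d$.
   Context: $k$ is an algebraically closed field of characteristic $p>0$; $k[\mathbb G_a]=k[T]$. $U_N\subset GL_N$ is the group of upper triangular unipotent $N\times N$ matrices, $k[U_N]=k[x_{i,j}:1\le i<j\le N]$, and $k[U_N]_{<d}$ is the subspace of polynomials of total degree $<d$ in the $x_{i,j}$. $U_N$ carries the structure of exponential type $\mathcal E_B(t)=\exp_B(t)=\sum_{n=0}^{p-1}(tB)^n/n!$ for strictly upper triangular $B$ with $B^p=0$. $(k[U_N])_{[d]}$ is the set of $f\in k[U_N]$ such that $\exp_B^*(f)\in k[T]$ has degree $\le d$ for all such $B$. *)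

(* Defs.v *)
From HB Require Import structures.
From mathcomp Require Import all_boot all_order all_algebra.
From mathcomp Require Export mpoly.
Set Implicit Arguments. Unset Strict Implicit. Unset Printing Implicit Defensive.
Import Order.TTheory GRing.Theory Num.Theory.
Local Open Scope ring_scope.

(* k[U_N] is realised as the subring of {mpoly k[N*N]} (variables = the
   matrix entries x_{i,j}, indexed by mxvec_index i j) consisting of the
   polynomials that only involve the variables x_{i,j} with i < j. *)
Definition upper_var (N : nat) (v : 'I_(N * N)) : bool :=
  [exists i : 'I_N, exists j : 'I_N, (i < j)%N && (v == mxvec_index i j)].

Definition in_kUN (k : fieldType) (N : nat) (f : {mpoly k[N * N]}) : Prop :=
  forall (m : 'X_{1..N * N}) (v : 'I_(N * N)),
    m \in msupp f -> (0 < m v)%N -> upper_var v.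

Definition strictly_upper (k : fieldType) (N : nat) (B : 'M[k]_N) : Prop :=
  forall i j : 'I_N, (j <= i)%N -> B i j = 0.

Definition expB (k : fieldType) (p N : nat) (B : 'M[k]_N) : 'M[{poly k}]_N :=
  \sum_(n < p) (('X ^+ n) * ((n`!)%:R^-1)%:P) *: map_mx polyC (B ^+ n).

(* exp_B^*(f) in k[T]: substitute x_{i,j} := (exp_B(t))_{i,j} *)
Definition pullback (k : fieldType) (p N : nat) (B : 'M[k]_N)
  (f : {mpoly k[N * N]}) : {poly k} :=
  mmap (@polyC k) (fun v : 'I_(N * N) => (mxvec (expB p B)) 0 v) f.

(* (k[U_N])_{[d]} for an integer d : f in k[U_N] with deg exp_B^*(f) <= d
   for all strictly upper triangular B with B^p = 0 (deg 0 = -oo, i.e.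
   the zero polynomial satisfies every bound). *)
Definition in_Udeg (k : fieldType) (p N : nat) (d : int)
  (f : {mpoly k[N * N]}) : Prop :=
  in_kUN f /\
  forall B : 'M[k]_N, strictly_upper B -> B ^+ p = 0 ->
    ((size (pullback p B f))%:Z - 1 <= d)%R.

(* Main.v *)
Require Import Defs.
From HB Require Import structures.
From mathcomp Require Import all_boot all_order all_algebra.
From mathcomp Require Import mpoly.
Import Order.TTheory GRing.Theory Num.Theory.
Set Implicit Arguments. Unset Strict Implicit. Unset Printing Implicit Defensive.
Local Open Scope ring_scope.
Lemma natr_neq0 (k : fieldType) (p i : nat) : p \in [pchar k] ->
  (0 < i < p)%N -> (i%:R : k) != 0.
Proof.
move=> hp /andP[i0 ip]; rewrite -(dvdn_pcharf hp).
by apply/negP => /(dvdn_leq i0); rewrite leqNgt ip.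
Qed.

Lemma fact_neq0 (k : fieldType) (p j : nat) : p \in [pchar k] ->
  (j < p)%N -> ((j`!)%:R : k) != 0.
Proof.
move=> hp; elim: j => [|j IH] jp; first by rewrite fact0 oner_neq0.
rewrite factS natrM mulf_neq0 //; last by apply: IH; apply: ltnW.
by rewrite (natr_neq0 hp).
Qed.

Definition lcoef (k : fieldType) (i : nat) : k :=
  if i == 0%N then 0 else (-1) ^+ i.+1 / i%:R.
Definition lpoly (k : fieldType) (N : nat) : {poly k} :=
  \poly_(i < N) lcoef k i.
Definition ecoef (k : fieldType) (j : nat) : k := (j`!%:R)^-1.
Definition epoly (k : fieldType) (p : nat) (q : {poly k}) : {poly k} :=
  \sum_(j < p) ecoef k j *: q ^+ j.

Arguments lcoef : clear implicits. Arguments lpoly : clear implicits.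
Arguments ecoef : clear implicits. Arguments epoly : clear implicits.

Lemma lpolyX (k : fieldType) N : lpoly k N = 'X * \poly_(i < N.-1) lcoef k i.+1.
Proof.
apply/polyP => i; rewrite coefXM !coef_poly.
case: i => [|i] /=; first by rewrite /lcoef; case: ifP.
by case: N => //.
Qed.

Lemma coef_lpolyX (k : fieldType) N m i : (i < m)%N -> ((lpoly k N) ^+ m)`_i = 0.
Proof.
move=> im; by rewrite lpolyX exprMn coefXnM im.
Qed.
Lemma ecoefS (k : fieldType) p i : p \in [pchar k] -> (i.+1 < p)%N ->
  ecoef k i.+1 * i.+1%:R = ecoef k i.
Proof.
move=> hp ip; rewrite /ecoef factS natrM invfM mulrAC mulVf ?mul1r //.
by rewrite (natr_neq0 hp).
Qed.

Lemma epoly_coef (k : fieldType) p N i : p \in [pchar k] -> (N <= p)%N ->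
  (i < N)%N -> (epoly k p (lpoly k N))`_i = (1 + 'X)`_i.
Proof.
move=> hp hNp iN.
have p0 : (0 < p)%N by apply: prime_gt0; apply: (pcharf_prime hp).
case: p hp hNp p0 => // q hp hNp _.
set l := lpoly k N; set G := epoly k q.+1 l.
set H := \sum_(j < q) ecoef k j *: l ^+ j.
have GH : G = H + ecoef k q *: l ^+ q.
  by rewrite /G /epoly big_ord_recr.
have dG : G^`() = l^`() * H.
  rewrite /G /epoly raddf_sum big_ord_recl /=.
  rewrite derivZ deriv_exp mulr0n scaler0 add0r mulr_sumr.
  apply: eq_bigr => j _; rewrite derivZ deriv_exp /= -scaler_nat scalerA.
  have -> : bump 0 j = j.+1 by [].
  rewrite add0n (ecoefS hp) ?ltnS //.
  by rewrite -scalerAr.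
have G0 : G`_0 = 1.
  rewrite /G /epoly coef_sum big_ord_recl /= big1.
    by rewrite expr0 coefZ coef1 mulr1 /ecoef fact0 invr1 addr0.
  by move=> j0 _; rewrite coefZ coef_lpolyX ?mulr0.
have dl i0 : (i0.+1 < N)%N -> l^`()`_i0 = (-1) ^+ i0.+2.
  move=> h; rewrite coef_deriv /l /lpoly coef_poly h /lcoef /= -[_ *+ i0.+1]mulr_natr.
  by rewrite divfK // (natr_neq0 hp) //= (leq_trans h).
have dl0 i0 : (N <= i0.+1)%N -> l^`()`_i0 = 0.
  by move=> h; rewrite coef_deriv /l /lpoly coef_poly ltnNge h mul0rn.
have Ql i0 : (i0.+1 < N)%N -> ((1 + 'X) * l^`())`_i0 = (i0 == 0%N)%:R.
  move=> h; rewrite mulrDl mul1r coefD coefXM dl //.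
  case: i0 h => [|i0] h /=; first by rewrite addr0 expr2 mulN1r opprK.
  by rewrite dl ?(ltn_trans _ h) // exprS mulN1r addNr.
have rec i0 : (i0.+1 < N)%N -> G`_i0.+1 * i0.+1%:R = G`_i0 * (1 - i0%:R).
  move=> h.
  have E1 : ((1 + 'X) * G^`())`_i0 = G`_i0.
    rewrite dG mulrA coefM big_ord_recl /= Ql ?(leq_ltn_trans _ h) // eqxx mul1r subn0.
    rewrite big1 ?addr0; last first.
      move=> j _; rewrite Ql ?mul0r //.
      have -> : bump 0 j = j.+1 by [].
      by rewrite (leq_ltn_trans _ h) // ltnS (ltn_ord j).
    rewrite GH coefD coefZ coef_lpolyX ?mulr0 ?addr0 //.
    by rewrite -ltnS (leq_trans h).
  move: E1; rewrite mulrDl mul1r coefD coefXM !coef_deriv.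
  case: i0 h => [|i0] h.
    rewrite eqxx addr0 mulr1n subr0 mulr1 => ->.
    by rewrite mulr1.
  rewrite -[_ *+ i0.+2]mulr_natr -[_ *+ i0.+1]mulr_natr /= => E1.
  rewrite (canRL (addrK _) E1).
  by rewrite mul1r mulrBr mulr1 mulr_natr.
have two : (2 < N)%N -> (2%:R : k) != 0.
  by move=> h; rewrite (natr_neq0 hp) //= (leq_trans h).
elim: i iN => [|i IH] iN; first by rewrite G0 coefD coef1 coefX addr0.
have := rec i iN; rewrite coefD coef1 coefX /=.
case: i IH iN => [|i] IH iN.
  rewrite mulr1n mulr0n subr0 !mulr1 G0 => ->.
  by rewrite add0r.
rewrite IH ?(ltn_trans _ iN) // coefD coef1 coefX /= add0r.
case: i IH iN => [|i] IH iN.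
  rewrite mulr1n subrr mulr0 => /eqP; rewrite mulf_eq0 (negbTE (two iN)) orbF.
  by move=> /eqP ->; rewrite add0r.
have nz : (i.+3%:R : k) != 0 by rewrite (natr_neq0 hp) //= (leq_trans iN).
rewrite mulr0n mul0r => /eqP; rewrite mulf_eq0 (negbTE nz) orbF.
by move=> /eqP ->; rewrite add0r.
Qed.
Lemma upper_pow (R : pzRingType) N (A : 'M[R]_N) :
  (forall i j : 'I_N, (j <= i)%N -> A i j = 0) ->
  forall n (i j : 'I_N), (j < i + n)%N -> (A ^+ n) i j = 0.
Proof.
move=> hA; elim=> [|n IH] i j hij.
  rewrite expr0 mxE addn0 in hij *.
  suff /negbTE -> : i != j by [].
  by apply: contraTneq hij => ->; rewrite ltnn.
rewrite exprSr -mulmxE mxE big1 // => l _.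
case: (ltnP l (i + n)) => hl; first by rewrite IH // mul0r.
by rewrite hA ?mulr0 // (leq_trans _ hl) // -ltnS -addnS.
Qed.

Lemma upper_nilp (R : pzRingType) N (A : 'M[R]_N) :
  (forall i j : 'I_N, (j <= i)%N -> A i j = 0) -> A ^+ N = 0.
Proof.
move=> hA; apply/matrixP => i j; rewrite mxE (upper_pow hA) //.
by rewrite (leq_trans (ltn_ord j)) // leq_addl.
Qed.

Lemma upper_powS (R : pzRingType) N (A : 'M[R]_N) n :
  (forall i j : 'I_N, (j <= i)%N -> A i j = 0) ->
  forall i j : 'I_N, (j <= i)%N -> (A ^+ n.+1) i j = 0.
Proof. by move=> hA i j h; rewrite (upper_pow hA) // addnS ltnS (leq_trans h) // leq_addr. Qed.
Definition Emx (k : fieldType) (R : comAlgType k) (p N : nat) (A : 'M[R]_N) : 'M[R]_N :=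
  \sum_(j < p) (ecoef k j)%:A *: A ^+ j.
Definition Lmx (k : fieldType) (R : comAlgType k) (N : nat) (A : 'M[R]_N) : 'M[R]_N :=
  \sum_(i < N) (lcoef k i)%:A *: A ^+ i.

Lemma Emx_Lmx (k : fieldType) (R : comAlgType k) (p N : nat) (A : 'M[R]_N) :
  p \in [pchar k] -> (N <= p)%N -> A ^+ N = 0 -> Emx p (Lmx A) = 1 + A.
Proof.
move=> hp hNp hA.
case: N A hA hNp => [|n] A hA hNp.
  by apply/matrixP => i; case: i.
set phi := in_alg R.
have hL : Lmx A = horner_mx A (map_poly phi (lpoly k n.+1)).
  rewrite /Lmx /lpoly poly_def rmorph_sum rmorph_sum /=; apply: eq_bigr => i _.
  by rewrite map_polyZ /= map_polyXn horner_mxZ rmorphXn /= horner_mx_X.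
have hE : Emx p (Lmx A) =
    horner_mx A (map_poly phi (epoly k p (lpoly k n.+1))).
  rewrite /Emx /epoly hL rmorph_sum rmorph_sum /=; apply: eq_bigr => j _.
  by rewrite map_polyZ /= horner_mxZ !rmorphXn.
set G := epoly k p (lpoly k n.+1).
have hG : G = 1 + 'X + drop_poly n.+1 (G - (1 + 'X)) * 'X^(n.+1).
  have := poly_take_drop n.+1 (G - (1 + 'X)).
  suff -> : take_poly n.+1 (G - (1 + 'X)) = 0.
    by rewrite add0r => ->; rewrite addrC subrK.
  apply/polyP => i; rewrite coef_take_poly coef0 coefB.
  by case: ifP => // hi; rewrite /G epoly_coef // subrr.
rewrite hE -/G hG !rmorphD rmorphM /= rmorphXn /= map_polyX horner_mx_X.
rewrite rmorphM /= rmorphXn /= horner_mx_X hA mulr0 addr0.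
by rewrite !rmorph1.
Qed.
Lemma poly_nonroot (k : closedFieldType) (q : {poly k}) :
  q != 0 -> exists x, q.[x] != 0.
Proof.
move=> q0.
have hs : size (q * 'X - 1) != 1%N.
  rewrite size_polyDl ?size_mulX //; first by rewrite eqSS size_poly_eq0.
  by rewrite size_polyN size_poly1 ltnS size_poly_gt0.
have /closed_rootP [x hx] := hs.
exists x; apply/eqP => hq; move: hx; rewrite /root hornerD hornerN hornerM hq.
by rewrite mul0r hornerC sub0r oppr_eq0 oner_eq0.
Qed.

Local Notation widen := (widen_ord (leqnSn _)).

Lemma lift_max_widen n (j : 'I_n) : lift ord_max j = widen j.
Proof. by apply/val_inj; rewrite /= /bump leqNgt ltn_ord. Qed.

Definition mmtail n (m : 'X_{1..n.+1}) : 'X_{1..n} := [multinom m (widen i) | i < n].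

Lemma mmtail_inj n (m0 m : 'X_{1..n.+1}) :
  m0 ord_max = m ord_max -> mmtail m0 = mmtail m -> m0 = m.
Proof.
move=> h1 h2; apply/mnmP => i; case: (unliftP ord_max i) => [j ->|->] //.
by move/mnmP: h2 => /(_ j); rewrite !mnmE lift_max_widen.
Qed.

Lemma muni_coef (k : fieldType) n (P : {mpoly k[n.+1]}) (m : 'X_{1..n.+1}) :
  ((muni P)`_(m ord_max))@_(mmtail m) = P@_m.
Proof.
rewrite muniE coef_sum raddf_sum /=.
rewrite (eq_bigr (fun m0 => if m0 == m then P@_m0 else 0)); last first.
  move=> m0 _; rewrite coefZ coefXn.
  case: (eqVneq m0 m) => [->|ne]; first by rewrite eqxx mulr1 mcoeffZ mcoeffX eqxx mulr1.
  case: eqP => e; last by rewrite mulr0 mcoeff0.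
  rewrite mulr1 mcoeffZ mcoeffX.
  case: eqP => e2; last by rewrite mulr0.
  by case/eqP: ne; apply: mmtail_inj.
case: (boolP (m \in msupp P)) => hm.
  rewrite (bigD1_seq m) ?msupp_uniq //= eqxx big1 ?addr0 // => m0 /negbTE.
  by move=> ->.
rewrite big1_seq ?(memN_msupp_eq0 hm) // => m0 /andP[_ hm0].
by case: eqP => // e; rewrite -e hm0 in hm.
Qed.

Definition vext (k : fieldType) n (v : 'I_n -> k) (x : k) : 'I_n.+1 -> k :=
  fun i => if unlift ord_max i is Some j then v j else x.

Lemma muni_eval (k : fieldType) n (P : {mpoly k[n.+1]}) v x :
  P.@[vext v x] = (map_poly (meval v) (muni P)).[x].
Proof.
rewrite mevalE muniE raddf_sum horner_sum; apply: eq_bigr => m _.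
rewrite /= map_polyZ map_polyXn hornerZ hornerXn /= mevalZ mevalX -mulrA.
congr (_ * _); rewrite big_ord_recr /=; congr (_ * _).
  apply: eq_bigr => j _; rewrite mnmE /vext -lift_max_widen liftK //.
by rewrite /vext unlift_none.
Qed.

Lemma mpoly_nv (k : closedFieldType) n (P : {mpoly k[n]}) :
  (forall v, P.@[v] = 0) -> P = 0.
Proof.
elim: n P => [|n IH] P hP.
  have h := hP (fun _ => 0); rewrite -(mpolyKC P) mevalC in h.
  by rewrite -(mpolyKC P) h.
have hU : muni P = 0.
  apply/polyP => a; rewrite coef0; apply: IH => v.
  have : map_poly (meval v) (muni P) = 0.
    apply/eqP; apply/negPn/negP => /poly_nonroot [x].
    by rewrite -muni_eval hP eqxx.
  by move/polyP => /(_ a); rewrite coef_map coef0.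
apply/mpolyP => m; rewrite -muni_coef hU coef0 !mcoeff0.
by [].
Qed.
Lemma prod_tX (k : fieldType) n (b : 'I_n -> k) (m : 'X_{1..n}) :
  \prod_i ((b i)%:P * 'X) ^+ (m i) = (\prod_i b i ^+ m i)%:P * 'X^(mdeg m).
Proof.
rewrite mdegE; elim/big_rec3: _ => [|i y1 y2 y3 _ ->].
  by rewrite expr0 mulr1.
by rewrite exprMn exprD polyCM rmorphXn mulrACA.
Qed.

Lemma mmap_tX (k : fieldType) n (b : 'I_n -> k) (g : {mpoly k[n]}) :
  mmap (@polyC k) (fun i => (b i)%:P * 'X) g =
  \sum_(m <- msupp g) (g@_m * \prod_i b i ^+ m i) *: 'X^(mdeg m).
Proof.
apply: eq_bigr => m _; rewrite /mmap1 prod_tX mulrA -polyCM.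
by rewrite mul_polyC.
Qed.

Lemma pihomog_eval (k : fieldType) n D (g : {mpoly k[n]}) (b : 'I_n -> k) :
  (pihomog mdeg D g).@[b] =
  \sum_(m <- msupp g) (if mdeg m == D then g@_m * \prod_i b i ^+ m i else 0).
Proof.
rewrite pihomogE raddf_sum big_mkcond /=; apply: eq_bigr => m _.
by case: ifP => _; rewrite ?meval0 // mevalZ mevalX.
Qed.

Lemma pihomog_coef (k : fieldType) n D (g : {mpoly k[n]}) m :
  (pihomog mdeg D g)@_m = if mdeg m == D then g@_m else 0.
Proof.
rewrite pihomogE raddf_sum big_mkcond /=.
rewrite (eq_bigr (fun m0 => if m0 == m then (if mdeg m == D then g@_m0 else 0) else 0)); last first.
  move=> m0 _; case: (eqVneq m0 m) => [->|ne].
    by case: ifP => _; rewrite ?mcoeff0 // mcoeffZ mcoeffX eqxx mulr1.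
  by case: ifP => _; rewrite ?mcoeff0 // mcoeffZ mcoeffX (negbTE ne) mulr0.
case: (boolP (m \in msupp g)) => hm.
  rewrite (bigD1_seq m) ?msupp_uniq //= eqxx big1 ?addr0 // => m0 /negbTE.
  by move=> ->.
rewrite big1_seq; first by case: ifP => // _; rewrite (memN_msupp_eq0 hm).
move=> m0 /andP[_ hm0].
by case: eqP => // e; rewrite -e hm0 in hm.
Qed.

Lemma msize_gen (k : closedFieldType) n (g : {mpoly k[n]}) e :
  (forall b : 'I_n -> k,
     (size (mmap (@polyC k) (fun i => ((b i)%:P * 'X)%R) g) <= e)%N) ->
  (msize g <= e)%N.
Proof.
move=> hb; rewrite leqNgt; apply/negP => he.
have g0 : g != 0 by apply: contraTneq he => ->; rewrite msize0.
set D := (msize g).-1.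
have hD : mdeg (mlead g) = D by rewrite /D -(mlead_deg g0).
have H0 : pihomog mdeg D g = 0.
  apply: mpoly_nv => b; rewrite pihomog_eval.
  have := hb b; rewrite mmap_tX => hs.
  have : (\sum_(m <- msupp g) (g@_m * \prod_i b i ^+ m i) *: 'X^(mdeg m))`_D = 0.
    apply: nth_default; apply: (leq_trans hs).
    by rewrite -ltnS /D prednK // (leq_ltn_trans _ he).
  move=> h; apply: etrans h; rewrite coef_sum; apply: eq_bigr => m _.
  by rewrite coefZ coefXn eq_sym; case: ifP; rewrite ?mulr1 ?mulr0.
have := pihomog_coef D g (mlead g); rewrite H0 mcoeff0 hD eqxx => /esym/eqP.
by rewrite mleadc_eq0 (negbTE g0).
Qed.
Lemma rmorph_comp (k : fieldType) n m (S : comNzRingType)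
  (rho : {rmorphism {mpoly k[m]} -> S}) (f : {mpoly k[n]})
  (lq : n.-tuple {mpoly k[m]}) :
  rho (f \mPo lq) =
  \sum_(mm <- msupp f) rho (f@_mm)%:MP * \prod_i rho (tnth lq i) ^+ mm i.
Proof.
rewrite /comp_mpoly /mmap rmorph_sum; apply: eq_bigr => mm _.
rewrite rmorphM rmorph_prod /=; congr (_ * _).
by apply: eq_bigr => i _; rewrite rmorphXn.
Qed.

Lemma map_mxX (R S : pzRingType) (rho : {rmorphism R -> S}) N (A : 'M[R]_N) j :
  map_mx rho (A ^+ j) = (map_mx rho A) ^+ j.
Proof.
elim: j => [|j IH].
  by rewrite !expr0; apply/matrixP => i j; rewrite !mxE rmorph_nat.
by rewrite !exprS -!mulmxE map_mxM IH.
Qed.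

Lemma map_Emx (k : fieldType) (R S : comAlgType k) (rho : {rmorphism R -> S})
  p N (A : 'M[R]_N) : (forall c : k, rho c%:A = c%:A) ->
  map_mx rho (Emx p A) = Emx p (map_mx rho A).
Proof.
move=> hc; rewrite /Emx map_mx_sum; apply: eq_bigr => j _.
by rewrite map_mxZ hc map_mxX.
Qed.
Lemma msizeMb (k : fieldType) n (p q : {mpoly k[n]}) a b :
  (msize p <= a.+1)%N -> (msize q <= b.+1)%N -> (msize (p * q)%R <= (a + b).+1)%N.
Proof.
have [->|p0] := eqVneq p 0; first by rewrite mul0r msize0.
have [->|q0] := eqVneq q 0; first by rewrite mulr0 msize0.
move=> hp hq; rewrite msizeM //.
by rewrite -subn1 leq_subLR (leq_trans (leq_add hp hq)) // addnS addSn add1n.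
Qed.

Lemma msize_prodX (k : fieldType) n m (q : 'I_n -> {mpoly k[m]}) (a : 'I_n -> nat) K :
  (forall i, msize (q i) <= K.+1)%N ->
  (msize (\prod_i q i ^+ a i)%R <= ((\sum_i a i) * K).+1)%N.
Proof.
move=> hq; elim/big_rec2: _ => [|i y1 y2 _ IH]; first by rewrite msize1.
rewrite mulnDl; apply: msizeMb => //.
elim: (a i) => [|t IHt]; first by rewrite expr0 msize1.
by rewrite exprS mulSn; apply: msizeMb.
Qed.

Lemma msize_comp (k : fieldType) n m (f : {mpoly k[n]}) (lq : n.-tuple {mpoly k[m]})
  K D : (forall i, msize (tnth lq i) <= K.+1)%N -> (msize f <= D.+1)%N ->
  (msize (f \mPo lq) <= (D * K).+1)%N.
Proof.
move=> hq hf; rewrite comp_mpolyE (leq_trans (msize_sum _ _ _)) //.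
apply/bigmax_leqP_seq => mm hm _.
rewrite (leq_trans (msizeZ_le _ _)) // (leq_trans (msize_prodX _ hq)) //.
rewrite ltnS leq_mul2r -mdegE.
by have := msize_mdeg_lt hm => h; rewrite -ltnS (leq_trans h hf) orbT.
Qed.

Lemma sizeMb (k : fieldType) (p q : {poly k}) a b :
  (size p <= a.+1)%N -> (size q <= b.+1)%N -> (size (p * q)%R <= (a + b).+1)%N.
Proof.
move=> hp hq; rewrite (leq_trans (size_polyMleq _ _)) //.
by rewrite -subn1 leq_subLR (leq_trans (leq_add hp hq)) // addnS addSn add1n.
Qed.

Lemma size_prodX (k : fieldType) n (q : 'I_n -> {poly k}) (a : 'I_n -> nat) K :
  (forall i, size (q i) <= K.+1)%N ->
  (size (\prod_i q i ^+ a i)%R <= ((\sum_i a i) * K).+1)%N.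
Proof.
move=> hq; elim/big_rec2: _ => [|i y1 y2 _ IH]; first by rewrite size_poly1.
rewrite mulnDl; apply: sizeMb => //.
elim: (a i) => [|t IHt]; first by rewrite expr0 size_poly1.
by rewrite exprS mulSn; apply: sizeMb.
Qed.
Definition Xv (k : fieldType) (N : nat) : 'M[{mpoly k[N * N]}]_N :=
  \matrix_(i, j) (if (i < j)%N then 'X_(mxvec_index i j) else 0).
Definition lqE (k : fieldType) (p N : nat) : (N * N).-tuple {mpoly k[N * N]} :=
  [tuple (mxvec (Emx p (Xv k N))) 0 v | v < N * N].
Definition lqL (k : fieldType) (N : nat) : (N * N).-tuple {mpoly k[N * N]} :=
  [tuple (mxvec (Lmx (Xv k N))) 0 v | v < N * N].

Lemma Xv_upper (k : fieldType) N (i j : 'I_N) : (j <= i)%N -> Xv k N i j = 0.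
Proof. by move=> h; rewrite mxE ltnNge h. Qed.

Lemma Lmx_upper (k : fieldType) N (i j : 'I_N) : (j <= i)%N -> Lmx (Xv k N) i j = 0.
Proof.
move=> h; rewrite /Lmx summxE big1 // => t _; rewrite mxE.
case: t => [[|t] ht] /=; first by rewrite /lcoef /= scale0r mul0r.
by rewrite upper_powS ?mulr0 // => a c; exact: Xv_upper.
Qed.

Lemma comp_lqL_Xv (k : fieldType) N :
  map_mx (comp_mpoly (lqL k N)) (Xv k N) = Lmx (Xv k N).
Proof.
apply/matrixP => i j; rewrite !mxE; case: ifP => h.
  by rewrite comp_mpolyXU -tnth_nth tnth_mktuple mxvecE.
by rewrite comp_mpoly0 Lmx_upper // leqNgt h.
Qed.

Lemma tnth_lqE_comp (k : fieldType) p N v : p \in [pchar k] -> (N <= p)%N ->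
  tnth (lqE k p N) v \mPo lqL k N = (mxvec (1 + Xv k N)) 0 v.
Proof.
move=> hp hNp; case/mxvec_indexP: v => a b; rewrite tnth_mktuple !mxvecE.
have -> : (Emx p (Xv k N)) a b \mPo lqL k N =
    (map_mx (comp_mpoly (lqL k N)) (Emx p (Xv k N))) a b by rewrite mxE.
rewrite map_Emx ?comp_lqL_Xv ?Emx_Lmx //.
  by apply: upper_nilp => i j; apply: Xv_upper.
by move=> c; rewrite !alg_mpolyC /= comp_mpolyC.
Qed.
Lemma f_comp (k : fieldType) p N (f : {mpoly k[N * N]}) :
  p \in [pchar k] -> (N <= p)%N -> in_kUN f ->
  (f \mPo lqE k p N) \mPo lqL k N = f.
Proof.
move=> hp hNp hf.
rewrite (rmorph_comp (comp_mpoly (lqL k N))) {3}[f]mpolyE.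
apply: eq_big_seq => mm hm.
rewrite /= comp_mpolyC.
rewrite mul_mpolyC mpolyXE_id; congr (_ *: _).
apply: eq_bigr => i _; rewrite tnth_lqE_comp //.
case: (eqVneq (mm i) 0%N) => [->|nz]; first by rewrite !expr0.
have := hf mm i hm; rewrite lt0n nz => /(_ isT).
case/existsP => a /existsP [b /andP [hab /eqP ->]].
rewrite mxvecE !mxE hab.
suff /negbTE -> : a != b by rewrite add0r.
by apply: contraTneq hab => ->; rewrite ltnn.
Qed.
Definition Bm (k : fieldType) N (b : 'I_(N * N) -> k) : 'M[k]_N :=
  \matrix_(i, j) (if (i < j)%N then b (mxvec_index i j) else 0).

Lemma scale_pow (R : comNzRingType) N (c : R) (M : 'M[R]_N) j :
  (c *: M) ^+ j = c ^+ j *: M ^+ j.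
Proof.
elim: j => [|j IH]; first by rewrite !expr0 scale1r.
by rewrite !exprS IH -!mulmxE -scalemxAl -scalemxAr scalerA -exprS.
Qed.

Lemma Emx_expB (k : fieldType) p N (B : 'M[k]_N) :
  Emx p ('X *: map_mx polyC B) = expB p B.
Proof.
rewrite /Emx /expB; apply: eq_bigr => j _.
by rewrite scale_pow map_mxX scalerA alg_polyC mulrC.
Qed.

Lemma rho_lqE (k : fieldType) p N (b : 'I_(N * N) -> k) v :
  mmap (@polyC k) (fun i => ((b i)%:P * 'X)%R) (tnth (lqE k p N) v) =
  (mxvec (expB p (Bm b))) 0 v.
Proof.
case/mxvec_indexP: v => a c; rewrite tnth_mktuple !mxvecE.
set rho := mmap (@polyC k) (fun i => ((b i)%:P * 'X)%R).
have -> : rho ((Emx p (Xv k N)) a c) = (map_mx rho (Emx p (Xv k N))) a c by rewrite mxE.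
rewrite map_Emx; last first.
  by move=> x; rewrite alg_mpolyC /rho /= mmapC alg_polyC.
rewrite -Emx_expB /=.
suff -> : map_mx rho (Xv k N) = 'X *: map_mx polyC (Bm b) by [].
apply/matrixP => i j; rewrite !mxE; case: ifP => _.
  by rewrite /rho mmapX mmap1U mulrC.
by rewrite /rho mmap0 mulr0.
Qed.

Lemma pullback_comp (k : fieldType) p N (f : {mpoly k[N * N]}) (b : 'I_(N * N) -> k) :
  pullback p (Bm b) f =
  mmap (@polyC k) (fun i => ((b i)%:P * 'X)%R) (f \mPo lqE k p N).
Proof.
rewrite (rmorph_comp (mmap (@polyC k) (fun i => ((b i)%:P * 'X)%R))) /=.
rewrite /pullback /mmap; apply: eq_bigr => mm _; congr (_ * _).
  by rewrite -/(mmap _ _ _) mmapC.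
by rewrite /mmap1; apply: eq_bigr => i _; rewrite -/(mmap _ _ _) rho_lqE.
Qed.
Lemma msize_Xv_pow (k : fieldType) N t (i j : 'I_N) :
  (msize ((Xv k N ^+ t) i j) <= t.+1)%N.
Proof.
elim: t i j => [|t IH] i j.
  by rewrite expr0 mxE; case: (i == j); rewrite ?msize1 ?msize0.
rewrite exprSr -mulmxE mxE (leq_trans (msize_sum _ _ _)) //.
apply/bigmax_leqP => l _; rewrite -addn1; apply: msizeMb => //.
rewrite mxE; case: ifP => _; last by rewrite msize0.
by rewrite msizeX mdeg1.
Qed.

Lemma msize_Lmx (k : fieldType) N (i j : 'I_N) :
  (msize (Lmx (Xv k N) i j) <= N)%N.
Proof.
rewrite /Lmx summxE (leq_trans (msize_sum _ _ _)) //.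
apply/bigmax_leqP => t _; rewrite mxE alg_mpolyC mul_mpolyC.
by rewrite (leq_trans (msizeZ_le _ _)) // (leq_trans (msize_Xv_pow _ _ _ _)).
Qed.

Lemma msize_lqL (k : fieldType) N i : (msize (tnth (lqL k N) i) <= (N - 1).+1)%N.
Proof.
case/mxvec_indexP: i => a b; rewrite tnth_mktuple mxvecE.
by rewrite (leq_trans (msize_Lmx _ _ _)) // subn1 leqSpred.
Qed.

Lemma size_expB (k : fieldType) p N (B : 'M[k]_N) (i j : 'I_N) :
  (size (expB p B i j) <= (p - 1).+1)%N.
Proof.
rewrite /expB summxE (leq_trans (size_sum _ _ _)) //.
apply/bigmax_leqP => t _; rewrite !mxE.
have h1 : (size (('X^t * ((t`!)%:R^-1)%:P) * ((B ^+ t) i j)%:P)%R <= (t + 0 + 0).+1)%N.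
  apply: sizeMb; last by rewrite size_polyC_leq1.
  by apply: sizeMb; rewrite ?size_polyXn ?size_polyC_leq1.
rewrite (leq_trans h1) // !addn0 ltnS.
have tp := ltn_ord t; rewrite subn1 -ltnS prednK //.
exact: (leq_ltn_trans (leq0n _) tp).
Qed.
Lemma pullback_size (k : fieldType) p N (B : 'M[k]_N) (f : {mpoly k[N * N]}) D :
  (msize f <= D.+1)%N -> (size (pullback p B f) <= (D * (p - 1)).+1)%N.
Proof.
move=> hf; rewrite /pullback /mmap (leq_trans (size_sum _ _ _)) //.
apply/bigmax_leqP_seq => mm hm _.
rewrite -[(D * (p - 1))%N]add0n; apply: sizeMb; first by rewrite size_polyC_leq1.
rewrite /mmap1 (leq_trans (size_prodX _ (K := p - 1) _)) //.
  by move=> v; case/mxvec_indexP: v => a b; rewrite mxvecE; exact: size_expB.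
by rewrite ltnS leq_mul2r -mdegE -ltnS (leq_trans (msize_mdeg_lt hm) hf) orbT.
Qed.

Unset Implicit Arguments.

Theorem proposition3p8 (k : closedFieldType) (p N e d : nat)
  (hp : p \in [pchar k]) (hNp : (N <= p)%N) (hed : (e * (N - 1) < d)%N) :
  (forall f : {mpoly k[N * N]},
     in_Udeg p (e%:Z - 1) f -> (msize f <= d)%N) /\
  (forall f : {mpoly k[N * N]},
     in_kUN f -> (msize f <= d)%N ->
     in_Udeg p ((p%:Z - 1) * (d%:Z - 1)) f).
Proof.
have p0 : (0 < p)%N by apply: prime_gt0; apply: (pcharf_prime hp).
have d0 : (0 < d)%N by apply: leq_ltn_trans hed.
split.
  move=> f [hf hB].
  have hg : (msize (f \mPo lqE k p N) <= e)%N.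
    apply: msize_gen => b; rewrite -pullback_comp.
    have hup : forall i j : 'I_N, (j <= i)%N -> Bm b i j = 0.
      by move=> i j h; rewrite mxE ltnNge h.
    have := hB (Bm b) hup _.
    rewrite -(subnK hNp) exprD (upper_nilp hup) mulr0 => /(_ erefl).
    by rewrite lerD2r lez_nat.
  rewrite -(f_comp hp hNp hf).
  apply: leq_trans (msize_comp (K := N - 1) (D := e.-1) _ _) _.
  - exact: msize_lqL.
  - by rewrite (leq_trans hg) // leqSpred.
  - by apply: leq_ltn_trans hed; rewrite leq_mul2r leq_pred orbT.
move=> f hf hfd; split => // B _ _.
have := @pullback_size k p N B f d.-1; rewrite prednK // => /(_ hfd).
move: (size _) => s hs.
clear hp hNp hed hf hfd B f.
case: p p0 hs => // p' _; case: d d0 => // d' _.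
rewrite subn1 /= => hs.
have E1 : (p'.+1%:Z - 1 = p'%:Z)%R by rewrite -addn1 PoszD addrK.
have E2 : (d'.+1%:Z - 1 = d'%:Z)%R by rewrite -addn1 PoszD addrK.
by rewrite E1 E2 -PoszM lerBlDr -PoszD lez_nat addn1 mulnC.
Qed.
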